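(* Let $A$ be an approximately unital Banach algebra. If $A$ has a left bounded approximate identity (respectively, right bounded approximate identity, two-sided bounded approximate identity) contained in ${\mathfrak r}_A$, then $A$ has a left bounded approximate identity (respectively, right, two-sided) contained in ${\mathfrak F}_A$.
   Context: Banach algebras are complex with submultiplicative norm; ''unital'' means identity of norm 1; approximately unital means having a contractive approximate identity. A left (resp. right, two-sided) bounded approximate identity is a bounded net $(e_t)$ with $e_ta\to a$ (resp. $ae_t\to a$, both) for all $a\in A$. Multiplier unitization $A^1$: $A$ if unital, otherwise $A+\mathbb{C}1$ with $\|a+\lambda1\|=\sup\{\|ac+\lambda c\|:c\in A,\|c\|\le1\}$. ${\mathfrak F}_A=\{a\in A:\|1-a\|_{A^1}\le1\}$; ${\mathfrak r}_A=\{a\in A:\mathrm{Re}\,\varphi(a)\ge0$ for all $\varphi\in(A^1)^*$ with $\|\varphi\|=\varphi(1)=1\}$. *)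

(* Defs.v *)
From mathcomp Require Import all_boot all_order all_algebra.
From mathcomp Require Import complex.
From mathcomp Require Import all_classical all_reals all_analysis.
Set Implicit Arguments. Unset Strict Implicit. Unset Printing Implicit Defensive.
Import Order.TTheory GRing.Theory Num.Theory.
Local Open Scope ring_scope.
Local Open Scope classical_set_scope.

Section BanachAlgebra.
Variable R : realType.
Variable V : completeNormedModType R[i].
Variable mul : V -> V -> V.

(* real-valued norm on A (the norm `|x| of a normed R[i]-module lives in R[i]
   and is real; we take its real part) *)
Definition nrm (x : V) : R := complex.Re `|x|.

Definition banach_algebra : Prop :=
  (forall a b c, mul (mul a b) c = mul a (mul b c)) /\
  [/\ (forall a b c, mul (a + b) c = mul a c + mul b c),
      (forall a b c, mul a (b + c) = mul a b + mul a c),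
      (forall (k : R[i]) a b, mul (k *: a) b = k *: mul a b),
      (forall (k : R[i]) a b, mul a (k *: b) = k *: mul a b) &
      (forall a b, nrm (mul a b) <= nrm a * nrm b)].

Definition directed (I : Type) (le : I -> I -> Prop) : Prop :=
  [/\ (exists i : I, True),
      (forall i, le i i),
      (forall i j k, le i j -> le j k -> le i k) &
      (forall i j, exists k, le i k /\ le j k)].

Definition net_cvg (I : Type) (le : I -> I -> Prop) (x : I -> V) (a : V) : Prop :=
  forall eps : R, 0 < eps -> exists t0 : I, forall t, le t0 t -> nrm (x t - a) < eps.

Definition net_bounded (I : Type) (x : I -> V) : Prop :=
  exists M : R, forall t, nrm (x t) <= M.

Definition has_left_bai (S : set V) : Prop :=
  exists (I : Type) (le : I -> I -> Prop) (e : I -> V),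
    [/\ directed le, net_bounded e, (forall t, S (e t)) &
        (forall a, net_cvg le (fun t => mul (e t) a) a)].

Definition has_right_bai (S : set V) : Prop :=
  exists (I : Type) (le : I -> I -> Prop) (e : I -> V),
    [/\ directed le, net_bounded e, (forall t, S (e t)) &
        (forall a, net_cvg le (fun t => mul a (e t)) a)].

Definition has_bai (S : set V) : Prop :=
  exists (I : Type) (le : I -> I -> Prop) (e : I -> V),
    [/\ directed le, net_bounded e, (forall t, S (e t)),
        (forall a, net_cvg le (fun t => mul (e t) a) a) &
        (forall a, net_cvg le (fun t => mul a (e t)) a)].

Definition approx_unital : Prop :=
  exists (I : Type) (le : I -> I -> Prop) (e : I -> V),
    [/\ directed le, (forall t, nrm (e t) <= 1),
        (forall a, net_cvg le (fun t => mul (e t) a) a) &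
        (forall a, net_cvg le (fun t => mul a (e t)) a)].

Definition is_unit_of_norm1 (u : V) : Prop :=
  (forall a, mul u a = a /\ mul a u = a) /\ nrm u = 1.

Definition unital : Prop := exists u : V, is_unit_of_norm1 u.

(* ---------- Multiplier unitization A^1 ----------
   If A is unital (with identity u), A^1 = A and a + l 1 denotes a + l u.
   Otherwise A^1 = A + C 1, whose elements are represented by pairs (a, l),
   with ||a + l 1|| = sup { ||a c + l c|| : c in A, ||c|| <= 1 }. *)

Definition unitization_norm (a : V) (l : R[i]) : R :=
  sup [set nrm (mul a c + l *: c) | c in [set c | nrm c <= 1]].

Definition A1norm (a : V) (l : R[i]) : R :=
  match pselect unital with
  | left h => nrm (a + l *: projT1 (cid h))
  | right _ => unitization_norm a l
  end.

Definition FA : set V := [set a | A1norm (- a) 1 <= 1].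

Definition state_unital (u : V) (phi : V -> R[i]) : Prop :=
  [/\ (forall a b, phi (a + b) = phi a + phi b),
      (forall (k : R[i]) a, phi (k *: a) = k * phi a),
      (exists M : R, forall a, complex.Re `|phi a| <= M * nrm a),
      sup [set complex.Re `|phi a| | a in [set a | nrm a <= 1]] = 1 &
      phi u = 1].

(* states of A^1 = A + C1 in the non-unital case; phi a l = phi(a + l 1) *)
Definition state_nonunital (phi : V -> R[i] -> R[i]) : Prop :=
  [/\ (forall a b l m, phi (a + b) (l + m) = phi a l + phi b m),
      (forall (k : R[i]) a l, phi (k *: a) (k * l) = k * phi a l),
      (exists M : R, forall a l, complex.Re `|phi a l| <= M * unitization_norm a l),
      sup [set complex.Re `|phi x.1 x.2| |
              x in [set x : V * R[i] | unitization_norm x.1 x.2 <= 1]] = 1 &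
      phi 0 1 = 1].

Definition rA : set V :=
  [set a | match pselect unital with
           | left h => forall phi, state_unital (projT1 (cid h)) phi ->
                         0 <= complex.Re (phi a)
           | right _ => forall phi, state_nonunital phi ->
                         0 <= complex.Re (phi a 0)
           end].

End BanachAlgebra.

(* Main.v *)
Require Import Defs.
From mathcomp Require Import all_boot all_order all_algebra.
From mathcomp Require Import complex.
From mathcomp Require Import all_classical all_reals all_analysis.
From mathcomp Require Import ring lra.
Import Order.TTheory GRing.Theory Num.Theory.
Local Open Scope ring_scope.
Local Open Scope complex_scope.
Local Open Scope classical_set_scope.

Lemma ge_sup' (R : realType) (E : set R) x : (exists y, E y) -> (forall y, E y -> y <= x) -> sup E <= x.
Proof. by move=> [y Ey] h; apply: ge_sup; [exists y|move=> z /h]. Qed.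

Lemma le_sup' (R : realType) (E : set R) x M : (forall y, E y -> y <= M) -> E x -> x <= sup E.
Proof. by move=> h Ex; apply: ub_le_sup => //; exists M => y /h. Qed.

Section HB.
Variable R : realType.
Variable V : completeNormedModType R[i].
Variable p : V -> R.
Hypothesis p_sub : forall x y, p (x + y) <= p x + p y.
Hypothesis p_hom : forall (r : R) x, 0 <= r -> p (r%:C *: x) = r * p x.

Local Notation sc r v := ((r : R)%:C *: (v : V)).

Lemma p0 : p 0 = 0.
Proof. by have := p_hom 0 0 (le_refl (0:R)); rewrite scale0r mul0r => ->. Qed.

Definition goodG (b : V) (G : set (V * R)) :=
  [/\ (forall l : R, G (sc l b, l * p b)),
      (forall u s v t (a c : R), G (u, s) -> G (v, t) -> G (sc a u + sc c v, a * s + c * t)) &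
      (forall u s, G (u, s) -> s <= p u)].

Lemma goodG_uniq b G u s t : goodG b G -> G (u, s) -> G (u, t) -> s = t.
Proof.
case=> _ hl hd hs ht.
have h1 := hd _ _ (hl _ _ _ _ 1 (-1) hs ht).
have h2 := hd _ _ (hl _ _ _ _ 1 (-1) ht hs).
rewrite rmorphN1 rmorph1 scaleN1r scale1r subrr p0 mul1r mulN1r subr_le0 in h1.
rewrite rmorphN1 rmorph1 scaleN1r scale1r subrr p0 mul1r mulN1r subr_le0 in h2.
by apply/eqP; rewrite eq_le h1 h2.
Qed.


Lemma scA (r1 r2 : R) (v : V) : sc r1 (sc r2 v) = sc (r1 * r2) v.
Proof. by rewrite scalerA rmorphM. Qed.
Lemma scDl (r1 r2 : R) (v : V) : sc (r1 + r2) v = sc r1 v + sc r2 v.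
Proof. by rewrite rmorphD scalerDl. Qed.
Lemma sc0 (v : V) : sc 0 v = 0.
Proof. by rewrite scale0r. Qed.
Lemma sc1 (v : V) : sc 1 v = v.
Proof. by rewrite scale1r. Qed.

Lemma p_neg_hom (r : R) x : r * p x <= p (sc r x).
Proof.
have [r0|r0] := leP 0 r; first by rewrite p_hom.
have h := p_sub (sc r x) (sc (- r) x).
rewrite -scDl subrr sc0 p0 in h.
have hm : p (sc (- r) x) = - r * p x by rewrite p_hom // oppr_ge0 ltW.
rewrite hm in h; lra.
Qed.

Lemma base_good b : goodG b [set x | exists l : R, x = (sc l b, l * p b)].
Proof.
split.
- by move=> l; exists l.
- move=> u s v t a c [l1 [-> ->]] [l2 [-> ->]]; exists (a * l1 + c * l2).
  by rewrite !scA scDl mulrDl !mulrA.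
- by move=> u s [l [-> ->]]; exact: p_neg_hom.
Qed.

Lemma hb_exists b : exists f : V -> R,
  [/\ forall a c u v, f (sc a u + sc c v) = a * f u + c * f v,
      forall v, f v <= p v & f b = p b].
Proof.
pose P := fun G => G = set0 \/ goodG b G.
have [A [PA Amax]] : exists A, P A /\ forall B, A `<` B -> ~ P B.
  apply: Zorn_bigcup => F FP Ftot.
  have gX X : F X -> (exists z, X z) -> goodG b X.
    by move=> FX [z Xz]; case: (FP _ FX) => // e; rewrite e in Xz.
  case: (pselect (exists X, F X /\ exists z, X z)) => [[X0 [FX0 X0z]] | hno]; last first.
    left; apply/seteqP; split => // -[u s] [X FX Xus]; exfalso; apply: hno.
    by exists X; split => //; exists (u, s).
  right; have gX0 := gX _ FX0 X0z; split.
  - by move=> l; exists X0 => //; case: gX0 => h _ _; apply: h.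
  - move=> u s v t a c [X FX Xus] [Y FY Yvt].
    case: (Ftot _ _ FX FY) => [XY|YX].
      exists Y => //; case: (gX Y FY (ex_intro _ _ Yvt)) => _ hl _.
      by apply: hl => //; exact: XY.
    exists X => //; case: (gX X FX (ex_intro _ _ Xus)) => _ hl _.
    by apply: hl => //; exact: YX.
  - by move=> u s [X FX Xus]; case: (gX X FX (ex_intro _ _ Xus)) => _ _ hd; exact: hd.
have gA : goodG b A.
  case: PA => // A0; exfalso; apply: (Amax _ _ (or_intror (base_good b))).
  rewrite A0; split => // h; have := h (sc 0 b, 0 * p b); apply => //; by exists 0.
have A00 : A (0, 0).
  by case: gA => h _ _; have := h 0; rewrite sc0 mul0r.
have Atot : forall v, exists s, A (v, s).
  move=> v; apply: contrapT => nv.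
  case: gA => gbase glin gdom.
  pose E := [set y | exists u s, A (u, s) /\ y = s - p (u - v)].
  have Eub : forall y, E y -> y <= p v.
    move=> y [u [s [Aus ->]]]; have := gdom _ _ Aus; have := p_sub (u - v) v.
    rewrite subrK; lra.
  pose c := sup E.
  have key : forall w t, A (w, t) -> c <= p (w + v) - t.
    move=> w t Awt; apply: (@ge_sup' _ E); first by exists (0 - p (0 - v)), 0, 0.
    move=> y [u [s [Aus ->]]].
    have := gdom _ _ (glin _ _ _ _ 1 1 Aus Awt); rewrite !sc1 !mul1r.
    have := p_sub (u - v) (w + v); rewrite addrA addrAC subrK; lra.
  have key2 : forall u s, A (u, s) -> s - p (u - v) <= c.
    by move=> u s Aus; apply: (@le_sup' _ E _ (p v) Eub); exists u, s.
  pose B := [set x | exists u s l, A (u, s) /\ x = (u + sc l v, s + l * c)].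
  apply: (Amax B).
    split.
      by move=> [u s] Aus; exists u, s, 0; rewrite sc0 mul0r !addr0.
    move=> BA; apply: nv; exists c; have := BA (v, c); apply.
    by exists 0, 0, 1; rewrite sc1 mul1r !add0r.
  right; split.
  - by move=> l; exists (sc l b), (l * p b), 0; rewrite sc0 mul0r !addr0.
  - move=> u s w t a d [u1 [s1 [l1 [Au1 [-> ->]]]]] [u2 [s2 [l2 [Au2 [-> ->]]]]].
    exists (sc a u1 + sc d u2), (a * s1 + d * s2), (a * l1 + d * l2); split.
      exact: glin.
    congr pair; last by ring.
    rewrite !scalerDr !scA scDl; rewrite -!addrA; congr (_ + _).
    by rewrite addrC -!addrA; congr (_ + _); rewrite addrC.
  - move=> x y [u [s [l [Aus [-> ->]]]]].
    have [l0|l0|->] := ltgtP l 0; last first.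
    + by rewrite sc0 addr0 mul0r addr0; exact: gdom.
    + have lV : 0 < l^-1 by rewrite invr_gt0.
      have := key _ _ (glin _ _ _ _ l^-1 0 Aus A00); rewrite sc0 addr0 mulr0 addr0 => h.
      have h2 := p_hom l (sc l^-1 u + v) (ltW l0).
      rewrite scalerDr scA mulfV ?gt_eqF // sc1 in h2.
      rewrite h2; have : l * c <= l * (p (sc l^-1 u + v) - l^-1 * s) by rewrite ler_pM2l.
      by rewrite mulrBr mulrA mulfV ?gt_eqF // mul1r; lra.
    + have m0 : 0 < - l by rewrite oppr_gt0.
      have mV : 0 < (- l)^-1 by rewrite invr_gt0.
      have := key2 _ _ (glin _ _ _ _ (- l)^-1 0 Aus A00); rewrite sc0 addr0 mulr0 addr0 => h.
      have h2 := p_hom (- l) (sc (- l)^-1 u - v) (ltW m0).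
      rewrite scalerDr scA mulfV ?gt_eqF // sc1 scalerN rmorphN scaleNr opprK in h2.
      have : - l * ((- l)^-1 * s - p (sc (- l)^-1 u - v)) <= - l * c by rewrite ler_pM2l.
      rewrite mulrBr mulrA mulfV ?gt_eqF // mul1r -h2 mulNr; lra.
have [f hf] := @boolp.choice _ _ (fun v s => A (v, s)) Atot.
have fu : forall u s, A (u, s) -> f u = s.
  by move=> u s Aus; exact: (@goodG_uniq b A u (f u) s gA (hf u) Aus).
exists f; split.
- move=> a c u v; apply: fu; case: gA => _ glin _; exact: glin.
- by move=> v; case: gA => _ _ gdom; exact: gdom.
- by apply: fu; case: gA => gbase _ _; have := gbase 1; rewrite sc1 mul1r.
Qed.

End HB.
Section Basics.
Variable R : realType.
Variable V : completeNormedModType R[i].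

Local Notation nrm := (@nrm R V).

Lemma normE (x : V) : `|x| = (nrm x)%:C.
Proof.
have h := normr_ge0 x.
rewrite /nrm; rewrite [LHS]complexE (ger0_Im h) mulr0 addr0 //.
Qed.

Lemma nrm_ge0 (x : V) : 0 <= nrm x.
Proof. by have := normr_ge0 x; rewrite normE lecR. Qed.

Lemma nrmD (x y : V) : nrm (x + y) <= nrm x + nrm y.
Proof. by have := ler_normD x y; rewrite !normE -rmorphD lecR. Qed.

Lemma nrmN (x : V) : nrm (- x) = nrm x.
Proof. by rewrite /nrm normrN. Qed.

Lemma nrm0 : nrm 0 = 0.
Proof. by rewrite /nrm normr0. Qed.

Lemma nrm_eq0 (x : V) : nrm x = 0 -> x = 0.
Proof. by move=> h; apply/eqP; rewrite -normr_eq0 normE h. Qed.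

Lemma nrmZ (k : R[i]) (x : V) : nrm (k *: x) = complex.Re `|k| * nrm x.
Proof. by rewrite /nrm normrZ normE; case: `|k| => a b /=; rewrite mulr0 subr0. Qed.

Lemma ReabsC (r : R) : complex.Re `|r%:C| = `|r|.
Proof. by rewrite normc_def /= expr0n /= addr0 sqrtr_sqr. Qed.

Lemma nrmZr (r : R) (x : V) : nrm (r%:C *: x) = `|r| * nrm x.
Proof. by rewrite nrmZ ReabsC. Qed.

End Basics.
Arguments normE {R V}. Arguments nrm_ge0 {R V}. Arguments nrmD {R V}. Arguments nrmN {R V}.
Arguments nrm0 {R V}. Arguments nrm_eq0 {R V}. Arguments nrmZ {R V}. Arguments nrmZr {R V}.

Section Cplx.
Variable R : realType.

Lemma Re_le_norm (z : R[i]) : complex.Re z <= complex.Re `|z|.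
Proof.
rewrite (@normc_def R z) /=; apply: le_trans (ler_norm _) _.
rewrite -sqrtr_sqr; apply: ler_wsqrtr; rewrite lerDl; exact: sqr_ge0.
Qed.

Lemma Re_norm_ge0 (z : R[i]) : 0 <= complex.Re `|z|.
Proof. by rewrite (@normc_def R z) /= sqrtr_ge0. Qed.

Lemma eq1_of_Re (z : R[i]) : complex.Re `|z| <= 1 -> complex.Re z = 1 -> z = 1.
Proof.
rewrite (@normc_def R z); case: z => a c /= h ea; subst a.
have h2 : 1 + c ^+ 2 <= 1.
  have := h; rewrite expr1n -(sqrtr1 R) ler_sqrt ?sqrtr1 //.
have c2 : c ^+ 2 = 0 by apply/eqP; rewrite eq_le sqr_ge0 andbT; lra.
by move/eqP: c2; rewrite expf_eq0 /= => /eqP ->.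
Qed.

End Cplx.
Arguments Re_le_norm {R}. Arguments Re_norm_ge0 {R}. Arguments eq1_of_Re {R}.

Section Support.
Variable R : realType.
Variable V : completeNormedModType R[i].
Local Notation nrm := (@nrm R V).
Local Notation sc r v := ((r : R)%:C *: (v : V)).

Lemma support (b : V) : exists psi : V -> R[i],
  [/\ (forall x y, psi (x + y) = psi x + psi y),
      (forall k x, psi (k *: x) = k * psi x),
      (forall x, complex.Re `|psi x| <= nrm x),
      (forall x, complex.Re (psi x) <= nrm x) & complex.Re (psi b) = nrm b].
Proof.
have hom : forall (r : R) x, 0 <= r -> nrm (r%:C *: x) = r * nrm x.
  by move=> r x r0; rewrite nrmZr ger0_norm.
have [f [flin fle fb]] := @hb_exists R V nrm (@nrmD R V) hom b.
have fD x y : f (x + y) = f x + f y.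
  by have := flin 1 1 x y; rewrite !scale1r !mul1r.
have fZ (a : R) x : f (sc a x) = a * f x.
  by have := flin a 0 x x; rewrite scale0r addr0 mul0r addr0.
have fN x : f (- x) = - f x.
  by have := fZ (-1) x; rewrite rmorphN1 scaleN1r mulN1r.
have ii x : 'i *: ('i *: x) = - x :> V.
  by rewrite scalerA -expr2 sqr_i scaleN1r.
have kdec (a c : R) x : (a +i* c) *: x = sc a x + sc c ('i *: x).
  rewrite scalerA -scalerDl; congr (_ *: _).
  by apply/eqP; rewrite eq_complex /= !mulr0 !mul0r !subr0 !mulr1 !addr0 add0r !eqxx.
pose psi x := (f x) +i* (- f ('i *: x)).
have psiD x y : psi (x + y) = psi x + psi y.
  by rewrite /psi scalerDr !fD; apply/eqP; rewrite eq_complex /= opprD !eqxx.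
have psiZ k x : psi (k *: x) = k * psi x.
  have sCA (k1 k2 : R[i]) (y : V) : k1 *: (k2 *: y) = k2 *: (k1 *: y).
    by rewrite !scalerA mulrC.
  case: k => a c; rewrite /psi kdec scalerDr !(sCA 'i) ii scalerN.
  rewrite !fD !fZ fN; apply/eqP; rewrite eq_complex /=.
  rewrite ?fZ; by apply/andP; split; apply/eqP; ring.
have psiRe x : complex.Re (psi x) = f x by [].
have psinorm x : complex.Re `|psi x| <= nrm x.
  have [z0|z0] := eqVneq (psi x) 0; first by rewrite z0 normr0 /= nrm_ge0.
  pose w := `|psi x| / psi x.
  have wz : w * psi x = `|psi x| by rewrite /w mulfVK.
  have nw : complex.Re `|w| = 1.
    by rewrite /w normrM normfV normr_id mulfV ?normr_eq0.
  rewrite -wz -psiZ psiRe; apply: le_trans (fle _) _.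
  by rewrite nrmZ nw mul1r.
exists psi; split => //.
Qed.

End Support.
Arguments support {R V}.

Section Complete.
Variable R : realType.
Variable V : completeNormedModType R[i].
Local Notation nrm := (@nrm R V).

Lemma ltC_of_Re (eps : R[i]) : 0 < eps -> 0 < complex.Re eps /\ eps = (complex.Re eps)%:C.
Proof.
case: eps => a b; rewrite ltcE /= => /andP[/eqP h1 h2]; split => //.
by rewrite h1.
Qed.

Lemma complete_seq (u : nat -> V) :
  (forall eps : R, 0 < eps -> exists N, forall m n, (N <= m)%N -> (N <= n)%N -> nrm (u m - u n) < eps) ->
  exists l, forall eps : R, 0 < eps -> exists N, forall n, (N <= n)%N -> nrm (u n - l) < eps.
Proof.
move=> hc.
have : cvg (u @ \oo).
  apply/cauchy_cvgP; apply: cauchy_exP => eps /ltC_of_Re [e0 ee].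
  have [N hN] := hc _ e0; exists (u N); exists N => // n /= hn.
  rewrite -ball_normE /= ee normE ltcR; exact: hN.
move=> /cvg_ex [l /cvgrPdist_lt h]; exists l => eps e0.
have e0' : 0 < eps%:C by rewrite ltcR.
have [N _ hN] := h _ e0'; exists N => n hn.
have := hN n hn; rewrite normE ltcR -nrmN opprB //.
Qed.

End Complete.
Arguments complete_seq {R V}.

Lemma le_of_eps (R : realType) (x y : R) : (forall eps, 0 < eps -> x < y + eps) -> x <= y.
Proof.
move=> h; rewrite leNgt; apply/negP => yx.
have := h (x - y); rewrite subr_gt0 => /(_ yx); lra.
Qed.

Section Alg.
Variable R : realType.
Variable V : completeNormedModType R[i].
Variable mul : V -> V -> V.
Hypothesis hBA : banach_algebra mul.
Local Notation nrm := (@nrm R V).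
Local Notation U := (unitization_norm mul).

Lemma bmulA a b c : mul (mul a b) c = mul a (mul b c).
Proof. by case: hBA. Qed.
Lemma bmulDl a b c : mul (a + b) c = mul a c + mul b c.
Proof. by case: hBA => _ []. Qed.
Lemma bmulDr a b c : mul a (b + c) = mul a b + mul a c.
Proof. by case: hBA => _ []. Qed.
Lemma bmulZl k a b : mul (k *: a) b = k *: mul a b.
Proof. by case: hBA => _ []. Qed.
Lemma bmulZr k a b : mul a (k *: b) = k *: mul a b.
Proof. by case: hBA => _ []. Qed.
Lemma nrm_mul a b : nrm (mul a b) <= nrm a * nrm b.
Proof. by case: hBA => _ []. Qed.
Lemma bmul0l a : mul 0 a = 0.
Proof. by have := bmulZl 0 0 a; rewrite !scale0r. Qed.
Lemma bmul0r a : mul a 0 = 0.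
Proof. by have := bmulZr 0 a 0; rewrite !scale0r. Qed.
Lemma bmulNl a b : mul (- a) b = - mul a b.
Proof. by rewrite -scaleN1r bmulZl scaleN1r. Qed.
Lemma bmulNr a b : mul a (- b) = - mul a b.
Proof. by rewrite -scaleN1r bmulZr scaleN1r. Qed.
Lemma bmulBl a b c : mul (a - b) c = mul a c - mul b c.
Proof. by rewrite bmulDl bmulNl. Qed.
Lemma bmulBr a b c : mul a (b - c) = mul a b - mul a c.
Proof. by rewrite bmulDr bmulNr. Qed.

Lemma U_bound a l c : nrm c <= 1 -> nrm (mul a c + l *: c) <= nrm a + complex.Re `|l|.
Proof.
move=> hc; apply: le_trans (nrmD _ _) _; rewrite nrmZ.
have := nrm_mul a c; have := nrm_ge0 a; have := nrm_ge0 c.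
have := Re_norm_ge0 l; nra.
Qed.

Lemma U_ge a l c : nrm c <= 1 -> nrm (mul a c + l *: c) <= U a l.
Proof.
move=> hc; apply: (@le_sup' _ _ _ (nrm a + complex.Re `|l|)).
  by move=> y [c' hc' <-]; exact: U_bound.
by exists c.
Qed.

Lemma U_le a l M : 0 <= M -> (forall c, nrm c <= 1 -> nrm (mul a c + l *: c) <= M) -> U a l <= M.
Proof.
move=> M0 h; apply: ge_sup'.
  by exists (nrm (mul a 0 + l *: 0)); exists 0 => //=; rewrite nrm0 ler01.
by move=> y [c hc <-]; exact: h.
Qed.

Lemma U01 : U 0 1 <= 1.
Proof. by apply: U_le => // c hc; rewrite bmul0l add0r scale1r. Qed.

Lemma U_ge0 a l : 0 <= U a l.
Proof. by apply: le_trans (nrm_ge0 (mul a 0 + l *: 0)) (U_ge a l 0 _); rewrite nrm0 ler01. Qed.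

Hypothesis hau : approx_unital mul.

Lemma right_U b a l : nrm (mul b a + l *: b) <= nrm b * U a l.
Proof.
case: hau => I [le [e [[[i0 _] lerefl _ _] e1 _ cvr]]].
apply: le_of_eps => eps e0.
set y := mul b a + l *: b.
have [t0 ht0] := cvr y eps e0.
have h1 := ht0 t0 (lerefl t0).
have e2 : mul y (e t0) = mul b (mul a (e t0) + l *: e t0).
  by rewrite /y bmulDl bmulA bmulZl bmulDr bmulZr.
have h2 : nrm (mul y (e t0)) <= nrm b * U a l.
  rewrite e2; apply: le_trans (nrm_mul _ _) _.
  by apply: ler_wpM2l; [exact: nrm_ge0 | exact: U_ge].
have := nrmD (y - mul y (e t0)) (mul y (e t0)); rewrite subrK.
have : nrm (y - mul y (e t0)) = nrm (mul y (e t0) - y) by rewrite -nrmN opprB.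
lra.
Qed.


Lemma state_from (b : V) (psi : V -> R[i]) (g : V -> R[i] -> V) :
  (forall x y, psi (x + y) = psi x + psi y) ->
  (forall k x, psi (k *: x) = k * psi x) ->
  (forall x, complex.Re `|psi x| <= nrm x) ->
  complex.Re (psi b) = 1 ->
  (forall a a' l m, g (a + a') (l + m) = g a l + g a' m) ->
  (forall k a l, g (k *: a) (k * l) = k *: g a l) ->
  (forall a l, nrm (g a l) <= U a l) ->
  g 0 1 = b ->
  state_nonunital mul (fun a l => psi (g a l)).
Proof.
move=> psiD psiZ psiN psib gD gZ gU g01.
have pb : psi b = 1.
  apply: eq1_of_Re => //; apply: le_trans (psiN b) _.
  by rewrite -g01; exact: le_trans (gU 0 1) U01.
have ub : forall y, [set complex.Re `|psi (g x.1 x.2)| | x in [set x : V * R[i] | U x.1 x.2 <= 1]] y -> y <= 1.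
  move=> y [[a l] /= hal <-]; apply: le_trans (psiN _) _; exact: le_trans (gU a l) hal.
split.
- by move=> a a' l m; rewrite gD psiD.
- by move=> k a l; rewrite gZ psiZ.
- by exists 1 => a l; rewrite mul1r; apply: le_trans (psiN _) (gU a l).
- apply/eqP; rewrite eq_le; apply/andP; split.
    apply: ge_sup' ub; exists (complex.Re `|psi (g 0 1)|); exists (0, 1) => //=; exact: U01.
  apply: (@le_sup' _ _ _ 1 ub); exists (0, 1); first exact: U01.
  by rewrite /= g01 pb Normc.normc1.
- by rewrite /= g01 pb.
Qed.

Lemma one_le (b w : V) (psi : V -> R[i]) (s : R) : 0 <= s ->
  (forall x y, psi (x + y) = psi x + psi y) ->
  (forall k x, psi (k *: x) = k * psi x) ->
  (forall x, complex.Re (psi x) <= nrm x) ->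
  complex.Re (psi b) = 1 -> 0 <= complex.Re (psi w) ->
  1 <= nrm (b + s%:C *: w).
Proof.
move=> s0 psiD psiZ psiRe psib pw.
apply: le_trans (psiRe _); rewrite psiD psiZ.
move: psib pw; case: (psi b) => p1 p2; case: (psi w) => q1 q2 /= -> pw.
rewrite mul0r subr0; have : 0 <= s * q1 by apply: mulr_ge0.
lra.
Qed.

Lemma normalize (c : V) : c <> 0 -> exists2 b : V, nrm b = 1 & c = (nrm c)%:C *: b.
Proof.
move=> c0; have n0 : nrm c != 0 by apply/eqP => /nrm_eq0.
have np : 0 < nrm c by rewrite lt_neqAle eq_sym n0 nrm_ge0.
exists ((nrm c)^-1%:C *: c).
  by rewrite nrmZr ger0_norm ?invr_ge0 ?nrm_ge0 // mulVf.
by rewrite scalerA -rmorphM mulfV // scale1r.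
Qed.

Lemma below_gen (g : V -> V) (c : V) (s : R) :
  (forall k x, g (k *: x) = k *: g x) ->
  (forall b, nrm b = 1 -> 1 <= nrm (b + s%:C *: g b)) ->
  nrm c <= nrm (c + s%:C *: g c).
Proof.
move=> gZ h; have [->|c0] := eqVneq c 0.
  by rewrite nrm0 nrm_ge0.
have [b b1 ec] := @normalize c (elimN eqP c0).
have n0 := nrm_ge0 c; move: ec n0; set n := nrm c => ec n0.
have := h b b1; rewrite ec gZ scalerA mulrC -scalerA -scalerDr nrmZr ger0_norm //.
nra.
Qed.

Lemma rA_nonunital x : ~ unital mul -> rA mul x ->
  forall phi, state_nonunital mul phi -> 0 <= complex.Re (phi x 0).
Proof. by rewrite /rA /=; case: pselect. Qed.

Lemma below_left x (nu : ~ unital mul) (hx : rA mul x) (s : R) (s0 : 0 <= s) c :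
  nrm c <= nrm (c + s%:C *: mul x c).
Proof.
apply: (@below_gen (fun c => mul x c) c s); first by move=> k y; rewrite bmulZr.
move=> b b1; have [psi [psiD psiZ psiN psiRe psib]] := support b.
rewrite b1 in psib.
apply: (@one_le b _ psi s s0 psiD psiZ psiRe psib).
have := @rA_nonunital x nu hx _ (@state_from b psi (fun a l => mul a b + l *: b) psiD psiZ psiN psib _ _ _ _).
rewrite /= scale0r addr0; apply.
- by move=> a a' l m; rewrite bmulDl scalerDl addrACA.
- by move=> k a l; rewrite bmulZl scalerDr scalerA.
- by move=> a l; apply: U_ge; rewrite b1.
- by rewrite bmul0l add0r scale1r.
Qed.

Lemma below_right x (nu : ~ unital mul) (hx : rA mul x) (s : R) (s0 : 0 <= s) c :
  nrm c <= nrm (c + s%:C *: mul c x).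
Proof.
apply: (@below_gen (fun c => mul c x) c s); first by move=> k y; rewrite bmulZl.
move=> b b1; have [psi [psiD psiZ psiN psiRe psib]] := support b.
rewrite b1 in psib.
apply: (@one_le b _ psi s s0 psiD psiZ psiRe psib).
have := @rA_nonunital x nu hx _ (@state_from b psi (fun a l => mul b a + l *: b) psiD psiZ psiN psib _ _ _ _).
rewrite /= scale0r addr0; apply.
- by move=> a a' l m; rewrite bmulDr scalerDl addrACA.
- by move=> k a l; rewrite bmulZr scalerDr scalerA.
- by move=> a l; have := right_U b a l; rewrite b1 mul1r.
- by rewrite bmul0r add0r scale1r.
Qed.


Lemma bound_by_cai z M : (forall c, nrm c <= 1 -> nrm (mul z c) <= M) -> nrm z <= M.
Proof.
move=> h; case: hau => I [le [e [[[i0 _] lerefl _ _] e1 _ cvr]]].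
apply: le_of_eps => eps e0.
have [t0 ht0] := cvr z eps e0.
have h1 := ht0 t0 (lerefl t0).
have h2 := h _ (e1 t0).
have := nrmD (z - mul z (e t0)) (mul z (e t0)); rewrite subrK.
have : nrm (z - mul z (e t0)) = nrm (mul z (e t0) - z) by rewrite -nrmN opprB.
lra.
Qed.

Lemma small_pow (d eps : R) : 0 < eps -> exists N : nat, 2 * d * (2^-1) ^+ N < eps.
Proof.
move=> e0; have [d0|d0] := leP d 0.
  exists 0%N; rewrite expr0 mulr1; lra.
set M := 2 * d / eps.
have M0 : 0 <= M by rewrite /M; apply: divr_ge0; lra.
exists (Num.Def.archi_bound M).
have := @Num.Theory.upper_nthrootP R M _ (leqnn _).
set N := Num.Def.archi_bound M => hM.
have p0 : 0 < (2 : R) ^+ N by rewrite exprn_gt0.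
rewrite exprVn ltr_pdivrMr //.
move: hM; rewrite /M => hM; rewrite ltr_pdivrMr // in hM; by rewrite [eps * _]mulrC.
Qed.

Lemma quasi_inv (y : V) : nrm y <= 2^-1 ->
  exists r, r + y + mul y r = 0 /\ r + y + mul r y = 0.
Proof.
move=> hy.
pose S := fix S n := if n is n'.+1 then - y - mul y (S n') else - y.
have SS n : S n.+1 = - y - mul y (S n) by [].
have Sc n : mul y (S n) = mul (S n) y.
  elim: n => [|n IH]; first by rewrite /= bmulNr bmulNl.
  by rewrite SS bmulBr bmulBl bmulNr bmulNl bmulA IH.
have SS' n : S n.+1 = - y - mul (S n) y by rewrite SS Sc.
have DS n : S n.+2 - S n.+1 = - mul y (S n.+1 - S n).
  have key a b : (- y - a) - (- y - b) = - (a - b).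
    by rewrite opprB opprK addrC -addrA addNKr opprB addrC.
  by rewrite bmulBr -(key (mul y (S n.+1)) (mul y (S n))) -!SS.
pose d := nrm (S 1%N - S 0%N).
have d0 : 0 <= d by exact: nrm_ge0.
have Db n : nrm (S n.+1 - S n) <= (2^-1) ^+ n * d.
  elim: n => [|n IH]; first by rewrite expr0 mul1r.
  rewrite DS nrmN; apply: le_trans (nrm_mul _ _) _.
  rewrite exprS; have := nrm_ge0 y; have := nrm_ge0 (S n.+1 - S n); nra.
have Sb n k : nrm (S (n + k)%N - S n) <= 2 * d * (2^-1) ^+ n - 2 * d * (2^-1) ^+ (n + k).
  elim: k => [|k IH]; first by rewrite addn0 subrr nrm0 subrr.
  have e : S (n + k.+1)%N - S n = (S (n + k).+1 - S (n + k)%N) + (S (n + k)%N - S n).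
    by rewrite addnS addrA subrK.
  rewrite e; apply: le_trans (nrmD _ _) _.
  have := Db (n + k)%N; rewrite addnS exprS.
  set q := (2^-1) ^+ (n + k); set p := (2^-1) ^+ n.
  have : 0 <= q * d by apply: mulr_ge0; rewrite // exprn_ge0 // invr_ge0.
  move: IH; rewrite -/q -/p; nra.
have Sb' n m : (n <= m)%N -> nrm (S m - S n) <= 2 * d * (2^-1) ^+ n.
  move=> /subnKC <-; apply: le_trans (Sb n (m - n)%N) _.
  rewrite lerBlDr lerDl; apply: mulr_ge0; first lra.
  by rewrite exprn_ge0 // invr_ge0.
have [r hr] : exists r, forall eps : R, 0 < eps -> exists N, forall n, (N <= n)%N -> nrm (S n - r) < eps.
  apply: complete_seq => eps e0.
  have [N hN] := @small_pow d (eps / 2) (divr_gt0 e0 (ltr0n _ 2)).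
  exists N => m n hm hn.
  have e : S m - S n = (S m - S N) - (S n - S N) by rewrite opprB addrA subrK.
  rewrite e; apply: le_lt_trans (nrmD _ _) _; rewrite nrmN.
  have := Sb' _ _ hm; have := Sb' _ _ hn; lra.
have zero z : (forall eps, 0 < eps -> nrm z < eps) -> z = 0.
  move=> h; apply: nrm_eq0; apply/eqP; rewrite eq_le nrm_ge0 andbT.
  by apply: le_of_eps => eps e0; rewrite add0r; apply: h.
have hy' : nrm y <= 1 by apply: le_trans hy _; rewrite invf_le1 // ler1n.
have nN z : nrm (z - r) = nrm (r - z) by rewrite -nrmN opprB.
exists r; split; apply: zero => eps e0.
- have [N hN] := hr _ (divr_gt0 e0 (ltr0n _ 2)).
  have e : r + y + mul y r = (r - S N.+1) + mul y (r - S N).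
    rewrite bmulBr SS; set m := mul y (S N).
    by rewrite opprB opprK [m + y]addrC addrA addrA [RHS]addrAC addrK.
  rewrite e; apply: le_lt_trans (nrmD _ _) _.
  have h1 := hN N.+1 (leqnSn N); have h2 := hN N (leqnn N).
  rewrite nN in h1; rewrite nN in h2.
  have h3 := nrm_mul y (r - S N); have := nrm_ge0 (r - S N); have := nrm_ge0 y.
  nra.
- have [N hN] := hr _ (divr_gt0 e0 (ltr0n _ 2)).
  have e : r + y + mul r y = (r - S N.+1) + mul (r - S N) y.
    rewrite bmulBl SS'; set m := mul (S N) y.
    by rewrite opprB opprK [m + y]addrC addrA addrA [RHS]addrAC addrK.
  rewrite e; apply: le_lt_trans (nrmD _ _) _.
  have h1 := hN N.+1 (leqnSn N); have h2 := hN N (leqnn N).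
  rewrite nN in h1; rewrite nN in h2.
  have h3 := nrm_mul (r - S N) y; have := nrm_ge0 (r - S N); have := nrm_ge0 y.
  nra.
Qed.

End Alg.

Arguments bmulA {R V mul}. Arguments bmulDl {R V mul}. Arguments bmulDr {R V mul}.
Arguments bmulZl {R V mul}. Arguments bmulZr {R V mul}. Arguments bmul0l {R V mul}.
Arguments bmul0r {R V mul}. Arguments bmulNl {R V mul}. Arguments bmulNr {R V mul}.
Arguments bmulBl {R V mul}. Arguments bmulBr {R V mul}. Arguments nrm_mul {R V mul}.
Arguments below_left {R V mul}. Arguments below_right {R V mul}. Arguments quasi_inv {R V mul}.

Section Elem.
Variable R : realType.
Variable V : completeNormedModType R[i].
Variable mul : V -> V -> V.
Hypothesis hBA : banach_algebra mul.
Local Notation nrm := (@nrm R V).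
Let mA := bmulA hBA. Let mDl := bmulDl hBA. Let mDr := bmulDr hBA.
Let mZl := bmulZl hBA. Let mZr := bmulZr hBA. Let m0l := bmul0l hBA. Let m0r := bmul0r hBA.
Let mNl := bmulNl hBA. Let mNr := bmulNr hBA. Let mBl := bmulBl hBA. Let mBr := bmulBr hBA.
Let nmul := nrm_mul hBA.

Variables (x r y : V) (s : R).
Hypothesis s0 : 0 < s.
Hypothesis ey : y = s%:C *: x.
Hypothesis hrl : r + y + mul y r = 0.
Hypothesis hrr : r + y + mul r y = 0.
Hypothesis contrL : forall c, nrm c <= nrm (c + s%:C *: mul x c).
Hypothesis contrR : forall c, nrm c <= nrm (c + s%:C *: mul c x).

Lemma xr : mul x r = mul r x.
Proof.
have : mul y r = mul r y.
  by apply: (addrI (r + y)); rewrite hrl hrr.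
rewrite ey mZl mZr => /eqP; rewrite -subr_eq0 -scalerBr scaler_eq0.
rewrite (negbTE (_ : s%:C != 0)) ?subr_eq0 => [/eqP //|].
by rewrite eq_complex /= negb_and (gt_eqF s0).
Qed.

Fixpoint g (k : nat) : V := if k is k'.+1 then g k' + r + mul r (g k') else 0.

Lemma gx k : mul (g k) x = mul x (g k).
Proof.
elim: k => [|k IH] /=; first by rewrite m0l m0r.
by rewrite !mDl !mDr -xr mA IH -!mA xr.
Qed.

Lemma gr k : mul (g k) r = mul r (g k).
Proof.
elim: k => [|k IH] /=; first by rewrite m0l m0r.
by rewrite !mDl !mDr mA IH.
Qed.

Definition Tk k c := c + mul (g k) c.
Definition Tk' k c := c + mul c (g k).

Lemma Tk_S k c : Tk k.+1 c = Tk k c + mul r (Tk k c).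
Proof. by rewrite /Tk /= !mDl !mDr mA !addrA. Qed.

Lemma Tk'_S k c : Tk' k.+1 c = Tk' k c + mul (Tk' k c) r.
Proof. by rewrite /Tk' /= !mDr !mDl mA -gr !addrA. Qed.


Lemma yZ z : mul y z = s%:C *: mul x z.
Proof. by rewrite ey mZl. Qed.
Lemma yZ' z : mul z y = s%:C *: mul z x.
Proof. by rewrite ey mZr. Qed.

Lemma key_l z : (z + mul r z) + mul y (z + mul r z) = z.
Proof.
have e : mul (r + y + mul y r) z = 0 by rewrite hrl m0l.
rewrite !mDl mA in e.
by rewrite mDr -[RHS]addr0 -e !addrA.
Qed.

Lemma key_r z : (z + mul z r) + mul (z + mul z r) y = z.
Proof.
have e : mul z (r + y + mul r y) = 0 by rewrite hrr m0r.
rewrite !mDr -mA in e.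
by rewrite mDl -[RHS]addr0 -e !addrA.
Qed.

Lemma Tk_le k c : nrm (Tk k c) <= nrm c.
Proof.
elim: k => [|k IH]; first by rewrite /Tk /= m0l addr0.
rewrite Tk_S; apply: le_trans (contrL _) _.
by rewrite -yZ key_l.
Qed.

Lemma Tk'_le k c : nrm (Tk' k c) <= nrm c.
Proof.
elim: k => [|k IH]; first by rewrite /Tk' /= m0r addr0.
rewrite Tk'_S; apply: le_trans (contrR _) _.
by rewrite -yZ' key_r.
Qed.

Fixpoint Q n c := if n is n'.+1 then Q n' c + Tk n'.+1 c else 0.
Fixpoint Q' n c := if n is n'.+1 then Q' n' c + Tk' n'.+1 c else 0.
Fixpoint G n := if n is n'.+1 then G n' + g n'.+1 else 0.

Lemma QS n c : Q n.+1 c = Q n c + Tk n.+1 c. Proof. by []. Qed.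
Lemma Q'S n c : Q' n.+1 c = Q' n c + Tk' n.+1 c. Proof. by []. Qed.
Lemma GS n : G n.+1 = G n + g n.+1. Proof. by []. Qed.

Lemma Q_G n c : Q n c = n%:R *: c + mul (G n) c.
Proof.
elim: n => [|n IH]; first by rewrite /= scale0r m0l addr0.
by rewrite QS GS IH [mul (G n + _) _]mDl /Tk mulrSr scalerDl scale1r addrACA.
Qed.

Lemma Q'_G n c : Q' n c = n%:R *: c + mul c (G n).
Proof.
elim: n => [|n IH]; first by rewrite /= scale0r m0r addr0.
by rewrite Q'S GS IH [mul _ (G n + _)]mDr /Tk' mulrSr scalerDl scale1r addrACA.
Qed.

Lemma Q_le n c : nrm (Q n c) <= n%:R * nrm c.
Proof.
elim: n => [|n IH] /=; first by rewrite nrm0 mul0r.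
apply: le_trans (nrmD _ _) _; rewrite mulrSr mulrDl mul1r.
by apply: lerD => //; exact: Tk_le.
Qed.

Lemma Q'_le n c : nrm (Q' n c) <= n%:R * nrm c.
Proof.
elim: n => [|n IH] /=; first by rewrite nrm0 mul0r.
apply: le_trans (nrmD _ _) _; rewrite mulrSr mulrDl mul1r.
by apply: lerD => //; exact: Tk'_le.
Qed.

Lemma Q_tel n a : mul y (Q n a) = a - Tk n a.
Proof.
elim: n => [|n IH]; first by rewrite /= m0r /Tk /= m0l addr0 subrr.
rewrite QS mDr IH Tk_S; set w := Tk n a.
have hk : mul y (w + mul r w) = w - (w + mul r w).
  by apply: (addIr (w + mul r w)); rewrite subrK [LHS]addrC key_l.
by rewrite hk addrA subrK.
Qed.

Lemma Q'_tel n a : mul (Q' n a) y = a - Tk' n a.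
Proof.
elim: n => [|n IH]; first by rewrite /= m0l /Tk' /= m0r addr0 subrr.
rewrite Q'S mDl IH Tk'_S; set w := Tk' n a.
have hk : mul (w + mul w r) y = w - (w + mul w r).
  by apply: (addIr (w + mul w r)); rewrite subrK [LHS]addrC key_r.
by rewrite hk addrA subrK.
Qed.

Lemma Q_x n a : Q n (mul x a) = mul x (Q n a).
Proof.
elim: n => [|n IH] /=; first by rewrite m0r.
by rewrite IH mDr /Tk mDr -mA gx mA.
Qed.

Lemma Q'_x n a : Q' n (mul a x) = mul (Q' n a) x.
Proof.
elim: n => [|n IH] /=; first by rewrite m0l.
by rewrite IH mDl /Tk' mDl mA -gx -mA.
Qed.

Lemma Q_B n a b : Q n (a - b) = Q n a - Q n b.
Proof. by rewrite !Q_G mBr scalerBr opprD addrACA. Qed.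

Lemma Q'_B n a b : Q' n (a - b) = Q' n a - Q' n b.
Proof. by rewrite !Q'_G mBl scalerBr opprD addrACA. Qed.

Lemma sinv_bound (w : V) (z : V) : s%:C *: w = z -> nrm w = s^-1 * nrm z.
Proof.
move=> <-; rewrite nrmZr ger0_norm ?ltW // mulrA mulVf ?mul1r //.
by rewrite gt_eqF.
Qed.

Lemma Q_bound n a : nrm (Q n a) <= n%:R * nrm (a - mul x a) + 2 * nrm a / s.
Proof.
have e : Q n a = Q n (a - mul x a) + mul x (Q n a) by rewrite Q_B Q_x subrK.
rewrite e; apply: le_trans (nrmD _ _) _; apply: lerD; first exact: Q_le.
have := Q_tel n a; rewrite yZ => /sinv_bound ->.
have := nrmD a (- Tk n a); rewrite nrmN; have := Tk_le n a.
have : 0 < s^-1 by rewrite invr_gt0.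
rewrite mulrC (mulrC 2); nra.
Qed.

Lemma Q'_bound n a : nrm (Q' n a) <= n%:R * nrm (a - mul a x) + 2 * nrm a / s.
Proof.
have e : Q' n a = Q' n (a - mul a x) + mul (Q' n a) x by rewrite Q'_B Q'_x subrK.
rewrite e; apply: le_trans (nrmD _ _) _; apply: lerD; first exact: Q'_le.
have := Q'_tel n a; rewrite yZ' => /sinv_bound ->.
have := nrmD a (- Tk' n a); rewrite nrmN; have := Tk'_le n a.
have : 0 < s^-1 by rewrite invr_gt0.
rewrite mulrC (mulrC 2); nra.
Qed.

End Elem.

Arguments U_le {R V mul}. Arguments bound_by_cai {R V mul}.

Section Final.
Variable R : realType.
Variable V : completeNormedModType R[i].
Variable mul : V -> V -> V.
Hypothesis hBA : banach_algebra mul.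
Hypothesis hau : approx_unital mul.
Local Notation nrm := (@nrm R V).

Lemma scal_cancel (n : nat) (a : V) : ((n.+1%:R : R)^-1)%:C *: (n.+1%:R *: a) = a.
Proof.
rewrite scalerA -[(n.+1%:R : R[i])](rmorph_nat (real_complex R)) -rmorphM mulVf.
  by rewrite scale1r.
by rewrite pnatr_eq0.
Qed.

Lemma element (nu : ~ unital mul) (x : V) (hx : rA mul x) (K : R) (K0 : 0 <= K)
  (hK : nrm x <= K) (n : nat) :
  exists f : V, [/\ FA mul f, nrm f <= 2,
     forall a, nrm (mul f a - a) <= nrm (a - mul x a) + 2 * nrm a / ((2 * (K + 1))^-1 * n.+1%:R)
   & forall a, nrm (mul a f - a) <= nrm (a - mul a x) + 2 * nrm a / ((2 * (K + 1))^-1 * n.+1%:R)].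
Proof.
set s := (2 * (K + 1))^-1.
have s0 : 0 < s by rewrite /s invr_gt0; lra.
pose y := s%:C *: x.
have ey : y = s%:C *: x by [].
have hy : nrm y <= 2^-1.
  rewrite nrmZr ger0_norm ?ltW //.
  have hK1 : K + 1 != 0 by apply: lt0r_neq0; lra.
  have -> : (2^-1 : R) = s * (K + 1) by rewrite /s; field; rewrite hK1.
  by rewrite ltr_pM2l //; lra.
have [r [hrl hrr]] := quasi_inv hBA y hy.
have contrL := below_left hBA x nu hx s (ltW s0).
have contrR := below_right hBA hau x nu hx s (ltW s0).
set N := n.+1.
pose k := ((N%:R : R)^-1)%:C.
pose f := - k *: G R V mul r N.
have N0 : 0 < (N%:R : R) by rewrite ltr0n.
have nk v : nrm (k *: v) = (N%:R)^-1 * nrm v.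
  by rewrite nrmZr ger0_norm // invr_ge0 ltW.
have fl a : mul f a - a = - (k *: Q R V mul r N a).
  rewrite /f (bmulZl hBA) (@Q_G R V mul hBA) scalerDr scal_cancel.
  by rewrite scaleNr opprD addrC.
have fr a : mul a f - a = - (k *: Q' R V mul r N a).
  rewrite /f (bmulZr hBA) (@Q'_G R V mul hBA) scalerDr scal_cancel.
  by rewrite scaleNr opprD addrC.
have fin A B : (N%:R)^-1 * (N%:R * A + 2 * B / s) = A + 2 * B / (s * N%:R).
  by field; rewrite !lt0r_neq0.
exists f; split.
- rewrite /FA /A1norm /=; case: pselect => [h|_]; first by exfalso.
  apply: U_le => // c hc.
  have e : mul (- f) c + 1 *: c = k *: Q R V mul r N c.
    by rewrite scale1r (bmulNl hBA) addrC -opprB fl opprK.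
  rewrite e nk; apply: le_trans (ler_wpM2l _ (@Q_le R V mul hBA x r y s ey hrl contrL N c)) _.
    by rewrite invr_ge0 ltW.
  by rewrite mulrA mulVf ?gt_eqF // mul1r.
- apply: (bound_by_cai hau) => c hc.
  have e : mul f c = c - k *: Q R V mul r N c by rewrite -[LHS](subrK c) fl addrC.
  rewrite e; apply: le_trans (nrmD _ _) _; rewrite nrmN nk.
  have := @Q_le R V mul hBA x r y s ey hrl contrL N c.
  have : 0 < (N%:R : R)^-1 by rewrite invr_gt0.
  have := nrm_ge0 c.
  have hN : (N%:R : R)^-1 * N%:R = 1 by rewrite mulVf // gt_eqF.
  nra.
- move=> a; rewrite fl nrmN nk -fin; apply: ler_wpM2l; first by rewrite invr_ge0 ltW.
  exact: (@Q_bound R V mul hBA x r y s s0 ey hrl hrr contrL N a).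
- move=> a; rewrite fr nrmN nk -fin; apply: ler_wpM2l; first by rewrite invr_ge0 ltW.
  exact: (@Q'_bound R V mul hBA x r y s s0 ey hrl hrr contrR N a).
Qed.


Lemma small_inv (B eps : R) : 0 <= B -> 0 < eps ->
  exists n0 : nat, forall n, (n0 <= n)%N -> B / n.+1%:R < eps.
Proof.
move=> B0 e0; exists (Num.Def.archi_bound (B / eps)) => n hn.
have h := @Num.Theory.archi_boundP R (B / eps) (divr_ge0 B0 (ltW e0)).
have h2 : ((Num.Def.archi_bound (B / eps))%:R : R) <= n.+1%:R by rewrite ler_nat; exact: leqW.
have h3 : B / eps < n.+1%:R by exact: lt_le_trans h h2.
rewrite ltr_pdivrMr // in h3.
by rewrite ltr_pdivrMr ?ltr0n // mulrC.
Qed.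

Lemma build (nu : ~ unital mul) (I : Type) (le : I -> I -> Prop) (e : I -> V)
  (dir : directed le) (bd : net_bounded e) (he : forall t, rA mul (e t)) :
  exists (I' : Type) (le' : I' -> I' -> Prop) (e' : I' -> V),
    [/\ directed le', net_bounded e', (forall t, FA mul (e' t)),
     (forall a, net_cvg le (fun t => mul (e t) a) a -> net_cvg le' (fun t => mul (e' t) a) a) &
     (forall a, net_cvg le (fun t => mul a (e t)) a -> net_cvg le' (fun t => mul a (e' t)) a)].
Proof.
case: dir => [[i0 _] lrefl ltrans lup].
case: bd => M hM.
have K0 : 0 <= M by apply: le_trans (hM i0); exact: nrm_ge0.
pose F (p : I * nat) := projT1 (cid (@element nu (e p.1) (he p.1) M K0 (hM p.1) p.2)).
have hF p := projT2 (cid (@element nu (e p.1) (he p.1) M K0 (hM p.1) p.2)).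
pose s := (2 * (M + 1))^-1.
have s0 : 0 < s by rewrite /s invr_gt0; lra.
pose le' (p q : I * nat) := le p.1 q.1 /\ (p.2 <= q.2)%N.
exists (I * nat)%type, le', F; split.
- split.
  + by exists (i0, 0%N).
  + by move=> p; split; [exact: lrefl | exact: leqnn].
  + move=> p q w [h1 h2] [h3 h4]; split; first exact: ltrans h1 h3.
    exact: leq_trans h2 h4.
  + move=> p q; have [k [k1 k2]] := lup p.1 q.1.
    by exists (k, maxn p.2 q.2); split; split => //=; rewrite ?leq_maxl ?leq_maxr.
- by exists 2 => p; have [_ ? _ _] := hF p.
- by move=> p; have [? _ _ _] := hF p.
- move=> a cv eps e0.
  have e2 : 0 < eps / 2 by rewrite divr_gt0.
  have [t0 ht0] := cv _ e2.
  have B0 : 0 <= 2 * nrm a / s by apply: divr_ge0; [apply: mulr_ge0; [lra | exact: nrm_ge0] | exact: ltW].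
  have [n0 hn0] := @small_inv _ _ B0 e2.
  exists (t0, n0) => -[t n] [/= h1 h2].
  have [_ _ hl _] := hF (t, n).
  apply: le_lt_trans (hl a) _.
  have -> : 2 * nrm a / ((2 * (M + 1))^-1 * n.+1%:R) = 2 * nrm a / s / n.+1%:R.
    by rewrite invfM mulrA.
  have := hn0 n h2; have := ht0 t h1.
  have -> : nrm (a - mul (e t) a) = nrm (mul (e t) a - a) by rewrite -nrmN opprB.
  by move=> ha hb; rewrite [eps]splitr; exact: ltrD.
- move=> a cv eps e0.
  have e2 : 0 < eps / 2 by rewrite divr_gt0.
  have [t0 ht0] := cv _ e2.
  have B0 : 0 <= 2 * nrm a / s by apply: divr_ge0; [apply: mulr_ge0; [lra | exact: nrm_ge0] | exact: ltW].
  have [n0 hn0] := @small_inv _ _ B0 e2.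
  exists (t0, n0) => -[t n] [/= h1 h2].
  have [_ _ _ hr] := hF (t, n).
  apply: le_lt_trans (hr a) _.
  have -> : 2 * nrm a / ((2 * (M + 1))^-1 * n.+1%:R) = 2 * nrm a / s / n.+1%:R.
    by rewrite invfM mulrA.
  have := hn0 n h2; have := ht0 t h1.
  have -> : nrm (a - mul a (e t)) = nrm (mul a (e t) - a) by rewrite -nrmN opprB.
  by move=> ha hb; rewrite [eps]splitr; exact: ltrD.
Qed.

End Final.

Theorem corollary3p9 (R : realType) (V : completeNormedModType R[i])
  (mul : V -> V -> V) (hBA : banach_algebra mul) (hau : approx_unital mul) :
  [/\ has_left_bai mul (rA mul) -> has_left_bai mul (FA mul),
      has_right_bai mul (rA mul) -> has_right_bai mul (FA mul) &
      has_bai mul (rA mul) -> has_bai mul (FA mul)].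
Proof.
have [h|nu] := pselect (unital mul).
- set u := projT1 (cid h).
  have [hu1 hu2] : is_unit_of_norm1 mul u := projT2 (cid h).
  have FAu : FA mul u.
    rewrite /FA /A1norm /=; case: pselect => [h'|nh]; last by exfalso; apply: nh.
    case: (cid h') => u' [hu1' _] /=.
    have -> : u' = u by rewrite -[LHS](hu1 _).1 (hu1' u).2.
    by rewrite scale1r addNr nrm0 ler01.
  have dir : directed (fun _ _ : unit => True).
    by split; [exists tt | by [] | by [] | move=> _ _; exists tt].
  have bd : net_bounded (fun _ : unit => u) by exists 1 => _; rewrite hu2.
  have cvl a : net_cvg (fun _ _ : unit => True) (fun _ => mul u a) a.
    by move=> eps e0; exists tt => _ _; rewrite (hu1 a).1 subrr nrm0.
  have cvr a : net_cvg (fun _ _ : unit => True) (fun _ => mul a u) a.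
    by move=> eps e0; exists tt => _ _; rewrite (hu1 a).2 subrr nrm0.
  split => _; exists unit, (fun _ _ => True), (fun _ => u); split => //.
- split.
  + move=> [I [le [e [dir bd he cv]]]].
    have [I' [le' [e' [dir' bd' he' cl _]]]] := @build R V mul hBA hau nu I le e dir bd he.
    by exists I', le', e'; split => // a; exact: cl.
  + move=> [I [le [e [dir bd he cv]]]].
    have [I' [le' [e' [dir' bd' he' _ cr]]]] := @build R V mul hBA hau nu I le e dir bd he.
    by exists I', le', e'; split => // a; exact: cr.
  + move=> [I [le [e [dir bd he cv1 cv2]]]].
    have [I' [le' [e' [dir' bd' he' cl cr]]]] := @build R V mul hBA hau nu I le e dir bd he.
    by exists I', le', e'; split => // a; [exact: cl | exact: cr].
Qed.
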